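(* Let $n\ge2$, let $z_1,\dots,z_n$ be indeterminates, and let $m_2\ge1$, $m_1\ge0$ be integers. Let $d=(d_1,\dots,d_{m_2+m_1-1})$ consist of $m_2-1$ entries equal to $2$ followed by $m_1$ entries equal to $1$. Then \[ M(m_2,m_1,n)=\sum_{1\le i<j\le n}\mathrm{monomial}_{\mathrm{inc}}(d,i,j;n)\,(z_i-z_j)^2 . \]
   Context: With $N=m_1+m_2+1$ and sums over all $N$-tuples $(b_1,\dots,b_N)$ of pairwise distinct elements of $\{1,\dots,n\}$, \[ M(m_2,m_1,n)=\sum_{b} z_{b_1}^2\cdots z_{b_{m_2}}^2\,z_{b_{m_2+1}}\cdots z_{b_{m_2+m_1}}\;-\;\sum_{b} z_{b_1}^2\cdots z_{b_{m_2-1}}^2\,z_{b_{m_2}}z_{b_{m_2+1}}\cdots z_{b_{m_2+m_1+1}}. \] For a sequence $d=(d_1,\dots,d_l)$ of nonnegative integers and distinct $i,j$, $\mathrm{monomial}_{\mathrm{inc}}(d,i,j;n)=\sum_{b}\prod_{h=1}^l z_{b_h}^{d_h}$, the sum over all $l$-tuples $b$ of pairwise distinct elements of $\{1,\dots,n\}\setminus\{i,j\}$ (empty product $=1$). *)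

(* Defs.v *)
From HB Require Import structures.
From mathcomp Require Import all_boot all_order all_algebra.
From mathcomp Require Import mpoly.
Set Implicit Arguments. Unset Strict Implicit. Unset Printing Implicit Defensive.
Import GRing.Theory.
Local Open Scope ring_scope.

(* Indices are 0-based: z_{k+1} is 'X_k with k : 'I_n. *)

(* M(m2,m1,n): sums over N-tuples (N = m1+m2+1) of pairwise distinct
   indices, encoded as injective finite functions 'I_N -> 'I_n. *)
Definition Mpoly (R : comRingType) (m2 m1 n : nat) : {mpoly R[n]} :=
  \sum_(b : {ffun 'I_(m1 + m2 + 1) -> 'I_n} | injectiveb b)
     \prod_(h < m1 + m2 + 1)
        'X_(b h) ^+ (if (h < m2)%N then 2 else if (h < m2 + m1)%N then 1 else 0)%N
  - \sum_(b : {ffun 'I_(m1 + m2 + 1) -> 'I_n} | injectiveb b)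
     \prod_(h < m1 + m2 + 1)
        'X_(b h) ^+ (if (h < m2 - 1)%N then 2 else 1)%N.

Definition monomial_inc (R : comRingType) (n : nat) (d : seq nat) (i j : 'I_n)
    : {mpoly R[n]} :=
  \sum_(b : {ffun 'I_(size d) -> 'I_n} |
          injectiveb b && [forall h, (b h != i) && (b h != j)])
     \prod_(h < size d) 'X_(b h) ^+ nth 0%N d h.

Definition dseq (m2 m1 : nat) : seq nat := nseq (m2 - 1) 2%N ++ nseq m1 1%N.

(* Main.v *)
Require Import Defs.
From HB Require Import structures.
From mathcomp Require Import all_boot all_order all_algebra.
From mathcomp Require Import mpoly.
From mathcomp Require Import ring zify.
Import GRing.Theory.
Local Open Scope ring_scope.

Section Aux.
Variable R : comRingType.
Variable n : nat.

Definition E K (e : 'I_K -> nat) (A : {set 'I_n}) : {mpoly R[n]} :=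
  \sum_(b : {ffun 'I_K -> 'I_n} | injectiveb b && [forall h, b h \notin A])
     \prod_(h < K) 'X_(b h) ^+ e h.

Definition ext K (k : 'I_K.+1) (f : {ffun 'I_K -> 'I_n}) (x : 'I_n)
  : {ffun 'I_K.+1 -> 'I_n} :=
  [ffun i => if unlift k i is Some j then f j else x].

Arguments ext {K}.
Arguments E {K}.

Lemma ext_lift K k f x j : @ext K k f x (lift k j) = f j.
Proof. by rewrite ffunE liftK. Qed.
Lemma ext_k K k f x : @ext K k f x k = x.
Proof. by rewrite ffunE unlift_none. Qed.

Lemma ext_cond K k f x (A : {set 'I_n}) : x \notin A ->
  (injectiveb (@ext K k f x) && [forall h, ext k f x h \notin A]) =
  (injectiveb f && [forall h, f h \notin x |: A]).
Proof.
move=> xA; apply/idP/idP.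
- case/andP=> /injectiveP inj /forallP av; apply/andP; split.
  + apply/injectiveP=> j1 j2 eq12; apply: (@lift_inj _ k); apply: inj.
    by rewrite !ext_lift.
  + apply/forallP=> j; rewrite in_setU1 negb_or; apply/andP; split.
    * apply/eqP=> fjx; have := inj (lift k j) k; rewrite ext_lift ext_k fjx.
      by move=> /(_ erefl) lk; have := neq_lift k j; rewrite lk eqxx.
    * by have := av (lift k j); rewrite ext_lift.
- case/andP=> /injectiveP inj /forallP av; apply/andP; split.
  + apply/injectiveP=> i1 i2.
    case: (unliftP k i1)=> [j1|] ->; case: (unliftP k i2)=> [j2|] ->;
      rewrite ?ext_lift ?ext_k //.
    * by move/inj->.
    * by move=> fx; have := av j1; rewrite in_setU1 fx eqxx.
    * by move=> fx; have := av j2; rewrite in_setU1 -fx eqxx.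
  + apply/forallP=> i; case: (unliftP k i)=> [j|] ->; rewrite ?ext_lift ?ext_k //.
    by have := av j; rewrite in_setU1 negb_or => /andP[].
Qed.

Lemma peel K (k : 'I_K.+1) e (A : {set 'I_n}) :
  E e A = \sum_(x | x \notin A) E (fun h => e (lift k h)) (x |: A) * 'X_x ^+ e k.
Proof.
rewrite /E (partition_big (fun b : {ffun 'I_K.+1 -> 'I_n} => b k) (fun x => x \notin A)) /=; last first.
  by move=> b /andP[_ /forallP]; apply.
apply: eq_bigr => x xA; rewrite mulr_suml.
rewrite (reindex_onto (fun f => ext k f x) (fun b => [ffun j => b (lift k j)])) /=; last first.
  move=> b /andP[_ /eqP bk]; apply/ffunP=> i; rewrite ffunE.
  by case: (unliftP k i)=> [j|] ->; rewrite ?liftK ?unlift_none ?ffunE.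
apply: eq_big => [f|f _].
  rewrite ext_cond // ext_k eqxx andbT.
  have -> : [ffun j => ext k f x (lift k j)] == f.
    by apply/eqP/ffunP=> j; rewrite ffunE ext_lift.
  by rewrite andbT.
rewrite (bigD1_ord k) //= ext_k mulrC; congr (_ * _).
by apply: eq_bigr => j _; rewrite ext_lift.
Qed.

Lemma E_cast K K' (H : K = K') e A :
  E e A = E (fun h : 'I_K' => e (cast_ord (esym H) h)) A.
Proof. by subst; apply: eq_bigr => b _; apply: eq_bigr => h _; rewrite cast_ord_id. Qed.

Lemma E_ext K (e e' : 'I_K -> nat) A : (forall h, e h = e' h) -> E e A = E e' A.
Proof. by move=> He; apply: eq_bigr => b _; apply: eq_bigr => h _; rewrite He. Qed.

Lemma sum_neq (F : 'I_n -> 'I_n -> {mpoly R[n]}) :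
  \sum_x \sum_(y | y != x) F y x = \sum_(i : 'I_n) \sum_(j : 'I_n | (i < j)%N) (F i j + F j i).
Proof.
under eq_bigr => x _ do rewrite (bigID (fun y : 'I_n => (y < x)%N)).


rewrite big_split; symmetry.
rewrite (eq_bigr (fun i : 'I_n => \sum_(j : 'I_n | (i < j)%N) F i j + \sum_(j : 'I_n | (i < j)%N) F j i)); last first.
  by move=> i _; rewrite big_split.
rewrite big_split; symmetry; congr (_ + _).
  rewrite (exchange_big_dep xpredT) //=; apply: eq_bigr => i _.
  apply: eq_bigl => j; rewrite -val_eqE /=; apply/idP/idP; [by case/andP|].
  by move=> lt; rewrite lt andbT; lia.
apply: eq_bigr => i _; apply: eq_bigl => j; rewrite -val_eqE /=.
apply/idP/idP; [case/andP; lia|]; move=> lt; apply/andP; split; lia.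
Qed.

End Aux.
Arguments E {R n K}.
Arguments E_cast {R n K K'}.
Arguments peel {R n K}.
Arguments E_ext {R n K}.
Arguments sum_neq {R n}.

Lemma nth_dseq m2 m1 (h : nat) : (h < m2 - 1 + m1)%N ->
  nth 0%N (dseq m2 m1) h = if (h < m2 - 1)%N then 2%N else 1%N.
Proof.
move=> hL; rewrite /dseq nth_cat size_nseq !nth_nseq.
case: ifP => // hm; case: ifP => //; lia.
Qed.

Theorem lemma3p7 (R : comRingType) (n m2 m1 : nat) :
  (2 <= n)%N -> (1 <= m2)%N ->
  Mpoly R m2 m1 n =
  \sum_(i < n) \sum_(j < n | (i < j)%N)
     monomial_inc R (dseq m2 m1) i j * ('X_i - 'X_j) ^+ 2.
Proof.
move=> _ m2pos.
set d := dseq m2 m1.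
pose L := (m2 - 1 + m1)%N.
have Hd : L = size d by rewrite /d /dseq size_cat !size_nseq.
have HN : (m1 + m2 + 1 = L.+2)%N by rewrite /L; lia.
pose G (i j : 'I_n) := monomial_inc R d i j.
have Gsym i j : G i j = G j i.
  rewrite /G /monomial_inc; apply: eq_bigl => b; congr (_ && _).
  by apply: eq_forallb => h; rewrite andbC.
have GE (e : 'I_L -> nat) (i j : 'I_n) : (forall h : 'I_L, e h = nth 0%N d h) ->
    E e (i |: (j |: set0)) = G i j.
  move=> He; rewrite (E_cast Hd) /G /monomial_inc /E.
  apply: eq_big => [b|b _].
    congr (_ && _); apply: eq_forallb => h.
    by rewrite setU0 in_setU1 in_set1 negb_or.
  by apply: eq_bigr => h _; rewrite He.
have E0 K (e : 'I_K -> nat) : E e set0 = \sum_(b : {ffun 'I_K -> 'I_n} | injectiveb b) \prod_(h < K) 'X_(b h) ^+ e h.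
  apply: eq_bigl => b.
  have -> : [forall h, b h \notin (set0 : {set 'I_n})] by apply/forallP => h; rewrite in_set0.
  by rewrite andbT.
rewrite /Mpoly -!E0 !(E_cast HN) !(peel ord_max).
have S0 (F : 'I_n -> {mpoly R[n]}) : \sum_(x | x \notin set0) F x = \sum_x F x.
  by apply: eq_bigl => x; rewrite in_set0.
rewrite !S0.
have hk : (m2 - 1 < L.+1)%N by rewrite /L; lia.
rewrite (eq_bigr (fun x => \sum_(y | y != x) G y x * 'X_y ^+ 2)); last first.
  move=> x _; rewrite (peel (inord (m2 - 1))) mulr_suml; apply: eq_big => [y|y _].
    by rewrite setU0 in_set1.
  rewrite GE; last first.
    move=> h; rewrite nth_dseq /=; last by case: h => /= h; rewrite /L.
    rewrite /bump inordK //; move: (ltn_ord h) => hL.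
    case: (leqP (m2 - 1) h) => ?; rewrite /= ?add0n ?add1n;
      repeat case: ifP => ?; lia.
  rewrite /= /bump inordK //.
  rewrite (_ : (L < m2 - 1)%N = false); last lia.
  rewrite (_ : (L.+1 < m2)%N = false); last lia.
  rewrite (_ : (L.+1 < m2 + m1)%N = false); last lia.
  rewrite /= (_ : (m2 - 1 < m2)%N = true); last lia.
  by rewrite expr0 mulr1.
rewrite [X in _ - X](eq_bigr (fun x => \sum_(y | y != x) G y x * 'X_y * 'X_x)); last first.
  move=> x _; rewrite (peel (ord_max : 'I_L.+1)) mulr_suml; apply: eq_big => [y|y _].
    by rewrite setU0 in_set1.
  rewrite GE; last first.
    move=> h; rewrite nth_dseq /=; last by case: h => /= h; rewrite /L.
    move: (ltn_ord h) => hL; rewrite /bump.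
    rewrite (_ : (L <= h)%N = false) /=; last lia.
    rewrite (_ : (L.+1 <= h)%N = false) /=; last lia.
    by [].
  rewrite /= /bump.
  rewrite (_ : (L.+1 <= L)%N = false) /=; last lia.
  rewrite (_ : (L < m2 - 1)%N = false) /=; last lia.
  rewrite (_ : (L.+1 < m2 - 1)%N = false) /=; last lia.
  by rewrite !expr1.
rewrite !sum_neq -sumrB; apply: eq_bigr => i _.
rewrite -sumrB; apply: eq_bigr => j _.
rewrite (Gsym j i) /G; ring.
Qed.
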